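(* For every $\varepsilon>0$ and $v\in\mathbb R$ there exist constants $A,B>0$ and $p_\varepsilon>0$ such that for all $p<p_\varepsilon$ and all $n\ge 1$, \[\mathbb P\big(T^p_{site}((0,0),(n,\lceil vn\rceil))\le n(v+1-\varepsilon)\big)\le A\exp(-Bn).\]
   Context: Site percolation model with parameter $p\in[0,1]$: each site (vertex) of $\mathbb Z^2$ receives an independent weight equal to $0$ with probability $p$ and $1$ with probability $1-p$. A path $(z_0,z_1,\dots)$ is semi-directed if $z_{k+1}-z_k\in\{(1,0),(0,1),(0,-1)\}$ for all $k$. The passage time of a path is the sum of the weights of the sites it visits, and $T^p_{site}(u,w)$ is the infimum of passage times over semi-directed paths from $u$ to $w$. *)

(* Defs.v *)
From HB Require Import structures.
From mathcomp Require Import all_boot all_order all_algebra.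
From mathcomp Require Import all_classical all_reals all_analysis.
Set Implicit Arguments. Unset Strict Implicit. Unset Printing Implicit Defensive.
Import Order.TTheory GRing.Theory Num.Theory.
Local Open Scope classical_set_scope.
Local Open Scope ring_scope.

Definition site := (int * int)%type.

Definition sd_step (z z' : site) : bool :=
  [|| (z'.1 == z.1 + 1) && (z'.2 == z.2),
      (z'.1 == z.1) && (z'.2 == z.2 + 1)
    | (z'.1 == z.1) && (z'.2 == z.2 - 1)].

Definition sd_path_from_to (u w : site) (s : seq site) : Prop :=
  path sd_step u s /\ last u s = w.

Definition weight (omega : site -> bool) (z : site) : nat := nat_of_bool (omega z).

Definition passage_time (omega : site -> bool) (u : site) (s : seq site) : nat :=
  \sum_(z <- u :: s) weight omega z.

Definition T_site {R : realType} (omega : site -> bool) (u w : site) : \bar R :=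
  ereal_inf [set ((passage_time omega u s)%:R)%:E | s in [set s | sd_path_from_to u w s]].

(* omega is a family of independent site weights, each equal to 0 with
   probability p and to 1 with probability 1 - p, under P. *)
Definition site_percolation {R : realType} {d : measure_display}
  {Omega : measurableType d} (P : probability Omega R) (p : R)
  (omega : Omega -> site -> bool) : Prop :=
  (forall z b, measurable [set x | omega x z = b]) /\
  (forall (S : seq site) (b : site -> bool), uniq S ->
     P (\bigcap_(z in [set` S]) [set x | omega x z = b z]) =
     (\prod_(z <- S) (if b z then 1 - p else p))%:E).

(* Main.v *)
Require Import Defs.
From HB Require Import structures.
From mathcomp Require Import all_boot all_order all_algebra.
From mathcomp Require Import all_classical all_reals all_analysis.
From mathcomp Require Import zify ring lra.
Import Order.TTheory GRing.Theory Num.Theory.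
Local Open Scope classical_set_scope.
Local Open Scope ring_scope.

Definition mv (u : site) (i : 'I_3) : site :=
  if val i == 0%N then (u.1 + 1, u.2) else if val i == 1%N then (u.1, u.2 + 1)
  else (u.1, u.2 - 1).

Fixpoint build (u : site) (d : seq 'I_3) : seq site :=
  if d is i :: d' then mv u i :: build (mv u i) d' else [::].

Lemma build_size u d : size (build u d) = size d.
Proof. by elim: d u => //= i d IH u; rewrite IH. Qed.

Lemma path_build {u s} : path sd_step u s ->
  exists d, build u d = s.
Proof.
elim: s u => [|z s IH] u /=; first by exists [::].
move=> /andP[st /IH [d hd]].
have [i hi] : exists i, mv u i = z.
  move: st; rewrite /sd_step; case: z {hd} => z1 z2 /=.
  move=> /or3P[] /andP[/eqP -> /eqP ->].
  - by exists (@Ordinal 3 0 isT).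
  - by exists (@Ordinal 3 1 isT).
  - by exists (@Ordinal 3 2 isT).
by exists (i :: d); rewrite /= hi hd.
Qed.
Lemma sum_uniq_subset (f : site -> nat) (s s' : seq site) :
  uniq s' -> {subset s' <= s} -> (\sum_(z <- s') f z <= \sum_(z <- s) f z)%N.
Proof.
elim: s s' => [|a s IH] s' us' sub.
  by case: s' us' sub => // b s' _ /(_ b (mem_head _ _)).
rewrite big_cons.
case: (boolP (a \in s')) => ain.
  rewrite (perm_big _ (perm_to_rem ain)) big_cons leq_add2l.
  apply: IH; first exact: rem_uniq.
  move=> z; rewrite (mem_rem_uniq _ us') => /andP[za zs].
  by move: (sub z zs); rewrite inE (negbTE za).
apply: leq_trans (leq_addl _ _); apply: IH => // z zs.
by move: (sub z zs); rewrite inE; case: eqP => [za|//]; move: ain; rewrite -za zs.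
Qed.

Lemma len_bound (u : site) (s : seq site) : path sd_step u s ->
  (`|(last u s).1 - u.1| + `|(last u s).2 - u.2| <= size s)%N.
Proof.
elim: s u => [|z s IH] u /=; first by rewrite !subrr.
move=> /andP[st ps]; have := IH z ps.
move: st; rewrite /sd_step => /or3P[] /andP[/eqP e1 /eqP e2]; rewrite e1 e2; lia.
Qed.

Lemma sum_take (f : site -> nat) (s : seq site) k :
  (\sum_(z <- take k s) f z <= \sum_(z <- s) f z)%N.
Proof. by rewrite -{2}(cat_take_drop k s) big_cat leq_addr. Qed.

Lemma key (omega : site -> bool) (u w : site) s K :
  sd_path_from_to u w s -> (K <= `|w.1 - u.1| + `|w.2 - u.2|)%N ->
  exists d : seq 'I_3, size d = K /\ uniq (u :: build u d) /\
    (passage_time omega u (build u d) <= passage_time omega u s)%N.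
Proof.
move=> [ps ls] hK.
move: ls; case: (shortenP ps) => p' pp' up' sub lp'.
have hK' : (K <= size p')%N.
  by apply: leq_trans hK _; rewrite -lp'; exact: len_bound.
have [d hd] := path_build (take_path K pp').
exists d; split; first by rewrite -(build_size u) hd size_take; case: ltngtP hK'.
split.
  by rewrite hd; have := take_uniq K.+1 up'.
rewrite hd; apply: leq_trans (sum_take _ (u :: p') K.+1) _.
apply: sum_uniq_subset => // z; rewrite !inE => /orP[->//|/sub ->]; by rewrite orbT.
Qed.
Lemma T_le (R : realType) (omega : site -> bool) (u w : site) (t : R) :
  (T_site omega u w <= t%:E)%E ->
  exists s, sd_path_from_to u w s /\ (passage_time omega u s)%:R <= t.
Proof.
move=> H; apply: contrapT => hn.
have : ((Num.floor t + 1)%:~R%:E <= @T_site R omega u w)%E.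
  apply: le_ereal_inf_tmp => _ [s hs <-]; rewrite lee_fin.
  have lt : t < (passage_time omega u s)%:R.
    by rewrite real_ltNge ?num_real //; apply/negP => hle; apply: hn; exists s.
  have : Num.floor t < (passage_time omega u s)%:Z.
    by rewrite real_floor_lt_int ?num_real // -pmulrn.
  move=> hlt; rewrite pmulrn ler_int; lia.
move=> h; have := le_trans h H; rewrite lee_fin real_leNgt ?num_real //.
by rewrite real_floorD1_gt ?num_real.
Qed.

Section Meas.
Context {d : measure_display} {Omega : measurableType d}
  {omega : Omega -> site -> bool}
  (hm : forall z b, measurable [set x | omega x z = b]).

Lemma meas_map (L : seq site) (Q : seq bool -> Prop) :
  measurable [set x | Q (map (omega x) L)].
Proof.
elim: L Q => [|z L IH] Q /=.
  case: (pselect (Q [::])) => hq.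
    by rewrite (_ : [set _ | _] = setT) //; apply/seteqP; split.
  by rewrite (_ : [set _ | _] = set0) //; apply/seteqP; split.
rewrite (_ : [set _ | _] =
   ([set x | omega x z = true] `&` [set x | Q (true :: map (omega x) L)]) `|`
   ([set x | omega x z = false] `&` [set x | Q (false :: map (omega x) L)])).
  by apply: measurableU; apply: measurableI => //; apply: (IH (fun l => Q (_ :: l))).
apply/seteqP; split => x /=.
  by move=> hq; case E: (omega x z) hq => hq; [left|right]; split.
by case=> -[/= e hq]; rewrite e.
Qed.
End Meas.
Lemma arith1 (R : realType) (v : R) (n : nat) :
  (`|Num.ceil (v * n%:R)| <= (Num.truncn `|v|).+1 * n)%N.
Proof.
set m := Num.ceil _.
have /andP[h1 h1'] := real_ceil_itv (num_real (v * n%:R)).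
have h2 := real_truncnS_gt (num_real `|v|).
rewrite -ltnS -(ltr_nat R) natr_absz intr_norm -addn1 natrD natrM.
set T := (Num.truncn `|v|).+1 in h2 *.
have n0 : 0 <= (n%:R : R) by [].
have hv1 : v * n%:R <= `|v| * n%:R by rewrite ler_wpM2r // ler_norm.
have hv2 : - (v * n%:R) <= `|v| * n%:R by rewrite -mulNr ler_wpM2r // -normrN ler_norm.
have hv3 : `|v| * n%:R <= T%:R * n%:R by rewrite ler_wpM2r // ltW.
rewrite intrB in h1; apply/ltr_normlP; split; lra.
Qed.

Lemma arith2 (R : realType) (v eps : R) (n K ones zer q : nat) (mi : int) :
  0 < eps -> 1 <= q%:R * eps -> v * n%:R <= mi%:~R -> K = (n + `|mi|)%N ->
  (ones + zer = K.+1)%N -> (ones%:R : R) <= n%:R * (v + 1 - eps) -> (n <= q * zer)%N.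
Proof.
move=> e0 hq hm hK hoz ho.
rewrite -(ler_nat R) natrM.
have zr : (zer%:R : R) = K.+1%:R - ones%:R by rewrite -hoz natrD; ring.
have ha : mi%:~R <= (`|mi|%:R : R) by rewrite natr_absz ler_int lez_abs.
rewrite hK -addn1 !natrD in zr.
have n0 : 0 <= (n%:R : R) by [].
have q0 : 0 <= (q%:R : R) by [].
have hz : eps * n%:R + 1 <= zer%:R.
  rewrite zr; move: ho; rewrite !mulrDr mulrN mulr1 => ho; lra.
nra.
Qed.

Lemma arith3 (R : realType) (n K c : nat) : (K <= c * n)%N ->
  ((3 ^ K * 2 ^ K.+1)%N%:R : R) * ((2 * 6 ^+ c)^-1) ^+ n
  <= 2 * expR (- (ln 2 * n%:R)).
Proof.
move=> hK.
have h2 : (2 : R) \in Num.pos by rewrite posrE.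
rewrite (mulrC (ln 2)) expRN expRM_natl (lnK h2) exprVn exprMn invfM.
rewrite mulrCA [2 * _]mulrC ler_wpM2l ?invr_ge0 ?exprn_ge0 //.
rewrite ler_pdivrMr ?exprn_gt0 // -exprM -!natrX -natrM ler_nat.
rewrite expnS mulnCA -expnMn leq_mul2l /=.
by rewrite leq_pexp2l.
Qed.

Lemma sum_bool_count (f : site -> bool) (s : seq site) :
  (\sum_(z <- s) nat_of_bool (f z) = count f s)%N.
Proof. by elim: s => [|z s IH]; rewrite ?big_nil ?big_cons ?IH. Qed.

Lemma prod_const (R : realType) (p : R) (s : seq site) :
  \prod_(z <- s) p = p ^+ size s.
Proof. by elim: s => [|z s IH]; rewrite ?big_nil ?big_cons ?IH ?exprS. Qed.

Theorem lemma3p10 (R : realType) (eps v : R) (heps : 0 < eps) :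
  exists A B peps : R, 0 < A /\ 0 < B /\ 0 < peps /\
    forall (p : R), 0 <= p -> p <= 1 -> p < peps ->
    forall (n : nat), (1 <= n)%N ->
    forall (d : measure_display) (Omega : measurableType d)
           (P : probability Omega R) (omega : Omega -> site -> bool),
      site_percolation P p omega ->
      (P [set x | (T_site (omega x) (0%Z, 0%Z) (n%:Z, Num.ceil (v * n%:R))
                   <= (n%:R * (v + 1 - eps))%:E)%E]
      <= (A * expR (- (B * n%:R)))%:E)%E.
Proof.
pose c := (Num.truncn `|v|).+2.
pose q := (Num.truncn (eps^-1)).+1.
pose r : R := (2 * 6 ^+ c)^-1.
have h6 : (1:R) <= 6 ^+ c by apply: exprn_ege1; lra.
have r0 : 0 < r by rewrite /r invr_gt0; lra.
have r1 : r <= 1 by rewrite /r invf_le1; lra.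
have hq : 1 <= q%:R * eps.
  have := real_truncnS_gt (num_real (eps^-1)); rewrite -/q => h.
  by rewrite -(ler_pdivrMr _ _ heps) mul1r ltW.
exists (2:R); exists (ln (2:R)); exists (r ^+ q).
split; first by [].
split; first by rewrite ln_gt0 //; lra.
split; first by rewrite exprn_gt0.
move=> p p0 p1 pq n n1 d Omega P omega [hm hind].
set u0 : site := (0%Z, 0%Z).
set m := Num.ceil (v * n%:R).
set w : site := (n%:Z, m).
set t := n%:R * (v + 1 - eps).
set ev := [set x | _].
pose K := (n + `|m|)%N.
pose I := (K.-tuple 'I_3 * K.+1.-tuple bool)%type.
pose L (i : I) := u0 :: build u0 (tval i.1).
pose Z (i : I) := mask (tval i.2) (L i).
pose Cond (i : I) := uniq (L i) && (n <= q * size (Z i))%N.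
pose E (i : I) := if Cond i then \bigcap_(z in [set` Z i]) [set x | omega x z = false]
                  else set0.
pose N := #|{: I}|.
pose A (k : nat) := match (insub k : option 'I_N) with
                    | Some o => E (enum_val o) | None => set0 end.
have mE : forall i, measurable (E i).
  move=> i; rewrite /E; case: ifP => _ //.
  rewrite (_ : \bigcap_(z in [set` Z i]) _ =
     [set x | (fun l => all (fun b => ~~ b) l) (map (omega x) (Z i))]).
    exact: (meas_map hm (Z i) (fun l => all (fun b => ~~ b) l)).
  apply/seteqP; split=> x /=.
    by move=> hx; apply/allP => b /mapP [z zin ->]; rewrite (hx z zin).
  by move=> /allP hx z zin /=; apply/negbTE; apply: hx; apply/mapP; exists z.
have mA : forall k, measurable (A k).
  by move=> k; rewrite /A; case: insub.
have mev : measurable ev.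
  pose F k := if (unpickle k : option (seq site)) is Some s then
     [set x | sd_path_from_to u0 w s /\ ((passage_time (omega x) u0 s)%:R <= t)]
     else set0.
  rewrite (_ : ev = \bigcup_k F k).
    apply: bigcupT_measurable => k; rewrite /F; case: unpickle => // s.
    rewrite (_ : [set x | _ /\ _] = [set x | (fun l => sd_path_from_to u0 w s /\
        ((\sum_(b <- l) nat_of_bool b)%:R <= t)) (map (omega x) (u0 :: s))]).
      exact: (meas_map hm (u0 :: s) (fun l => sd_path_from_to u0 w s /\
        ((\sum_(b <- l) nat_of_bool b)%:R <= t))).
    by apply: eq_set => x; rewrite big_map.
  apply/seteqP; split => x /=.
    move=> /T_le [s [hs hle]]; exists (pickle s) => //.
    by rewrite /F pickleK.
  move=> [k _]; rewrite /F; case: unpickle => // s [hs hle].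
  apply: (@le_trans _ _ ((passage_time (omega x) u0 s)%:R)%:E); last by rewrite lee_fin.
  by apply: ge_ereal_inf; exists ((passage_time (omega x) u0 s)%:R)%:E => //; exists s.
have sub : ev `<=` \big[setU/set0]_(k < N) A k.
  move=> x /T_le [s [hs hle]].
  have hK : (K <= `|w.1 - u0.1| + `|w.2 - u0.2|)%N by rewrite /= !subr0 /K; lia.
  have [dd [sd [ud pd]]] := key (omega x) u0 w s K hs hK.
  pose msk := map (fun z => ~~ omega x z) (u0 :: build u0 dd).
  have smsk : size msk == K.+1 by rewrite size_map /= build_size sd.
  have sdd : size dd == K by apply/eqP.
  pose i : I := (Tuple sdd, Tuple smsk).
  rewrite -bigcup_mkord; exists (val (enum_rank i)); first exact: ltn_ord.
  rewrite /A valK enum_rankK.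
  have ZE : Z i = seq.filter (fun z => ~~ omega x z) (L i) by rewrite filter_mask.
  have cond : Cond i.
    rewrite /Cond ud /= ZE size_filter.
    apply: (@arith2 R v eps n K (count (omega x) (L i)) _ q m) => //.
    - exact: real_ceil_ge (num_real _).
    - by have := count_predC (omega x) (L i); rewrite /= build_size sd.
    - apply: le_trans hle; rewrite ler_nat -sum_bool_count; exact: pd.
  rewrite /E cond => z hz /=.
  by move: hz; rewrite /= ZE mem_filter => /andP[hz _]; exact: negbTE hz.
have mU : measurable (\big[setU/set0]_(k < N) A k).
  by apply: bigsetU_measurable => k _.
apply: (@le_trans _ _ (P (\big[setU/set0]_(k < N) A k))).
  by apply: le_measure => //; rewrite inE.
apply: le_trans (Boole_inequality _ _) _; first by move=> k _.
apply: (@le_trans _ _ (\sum_(k < N) (r ^+ n)%:E)).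
  apply: lee_sum => k _; rewrite /A; case: insub => [oo|]; last first.
    by rewrite measure0 lee_fin exprn_ge0 // ltW.
  rewrite /E; case: ifP => [/andP[uL hsz]|_]; last first.
    by rewrite measure0 lee_fin exprn_ge0 // ltW.
  have /= -> := hind (Z (enum_val oo)) (fun _ => false) (mask_uniq uL _).
  rewrite lee_fin prod_const.
  apply: (@le_trans _ _ ((r ^+ q) ^+ size (Z (enum_val oo)))).
    by apply: lerXn2r; [rewrite nnegrE|rewrite nnegrE exprn_ge0 // ltW|exact: ltW].
  by rewrite -exprM; apply: ler_wiXn2l => //; rewrite ltW.
rewrite sumEFin lee_fin sumr_const card_ord.
rewrite /N card_prod !card_tuple card_ord card_bool -[_ *+ _]mulr_natl.
apply: arith3.
have := @arith1 R v n; rewrite /K /c -/m; nia.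
Qed.
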